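(* Let $R$ be a ring. The following conditions are equivalent for a complex $F$ of left $R$-modules. (1) $F$ is exact. (2) Every morphism $X\to F$ with $X$ a bounded complex of projective modules factors through a projective complex. (3) Every morphism $X\to F$ with $X$ a bounded below complex of projective modules factors through a projective complex. (4) Every morphism $X\to F$ with $X$ a DG-projective complex factors through a projective complex.
   Context: Complexes are homologically indexed; a complex $X$ is bounded below if there is $b$ with $X_n=0$ for all $n\le b$, and bounded if additionally $X_n=0$ for all sufficiently large $n$. For complexes $X,Y$, $\mathrm{Hom}^\bullet(X,Y)$ is the complex with $\mathrm{Hom}^\bullet(X,Y)_n=\prod_i\mathrm{Hom}_R(X_i,Y_{i+n})$ and differential $\psi\mapsto(d^Y_{i+n}\psi_i-(-1)^n\psi_{i-1}d^X_i)_i$. A complex $X$ is DG-projective if every $X_n$ is projective and $\mathrm{Hom}^\bullet(X,G)$ is exact for every exact complex $G$. *)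

(* Defs.v *)
From HB Require Import structures.
From mathcomp Require Import all_boot all_order all_algebra.
Unset Printing Implicit Defensive.
Import Order.TTheory GRing.Theory Num.Theory.
Local Open Scope ring_scope.

(* Complexes are homologically indexed by [int].
   To avoid dependent-type casts between X (i-1+1) and X i, the differential
   is given as a family d i j : X i -> X j that vanishes unless j = i - 1. *)

Record complex (R : pzRingType) := Complex {
  cobj :> int -> lmodType R;
  cd : forall i j : int, {linear cobj i -> cobj j};
  cd_supp : forall (i j : int) (x : cobj i), j != i - 1 -> cd i j x = 0;
  cd_cd : forall (i j k : int) (x : cobj i), cd j k (cd i j x) = 0 }.
Arguments cobj {R} c i.
Arguments cd {R} c i j.

Section Defs.
Variable R : pzRingType.

Record chain_map (X Y : complex R) := ChainMap {
  cmap :> forall i : int, {linear X i -> Y i};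
  cmap_comm : forall (i j : int) (x : X i),
      cmap j (cd X i j x) = cd Y i j (cmap i x) }.
Arguments cmap {X Y} c i.

Definition exact_complex (X : complex R) : Prop :=
  forall (i : int) (x : X i), cd X i (i - 1) x = 0 ->
    exists y : X (i + 1), cd X (i + 1) i y = x.

Definition trivial_module (M : lmodType R) : Prop := forall x : M, x = 0.

Definition projective_module (P : lmodType R) : Prop :=
  forall (M N : lmodType R) (g : {linear M -> N}), (forall y : N, exists x : M, g x = y) ->
  forall f : {linear P -> N}, exists h : {linear P -> M},
    forall x : P, g (h x) = f x.

(* projective complex: projective object of the category of complexes,
   i.e. lifting property along epimorphisms (= degreewise surjective maps) *)
Definition projective_complex (P : complex R) : Prop :=
  forall (M N : complex R) (g : chain_map M N),
    (forall (i : int) (y : N i), exists x : M i, g i x = y) ->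
  forall f : chain_map P N, exists h : chain_map P M,
    forall (i : int) (x : P i), g i (h i x) = f i x.

Definition bounded_below (X : complex R) : Prop :=
  exists b : int, forall n : int, n <= b -> trivial_module (X n).

Definition bounded (X : complex R) : Prop :=
  bounded_below X /\ exists t : int, forall n : int, t <= n -> trivial_module (X n).

Definition degreewise_projective (X : complex R) : Prop :=
  forall n : int, projective_module (X n).

(* Elements of Hom^.(X,Y)_n = prod_i Hom_R(X_i, Y_{i+n}), represented as a
   family psi i j : X i -> Y j vanishing unless j = i + n. *)
Definition homogeneous {X Y : complex R} (n : int)
    (psi : forall i j : int, {linear X i -> Y j}) : Prop :=
  forall (i j : int) (x : X i), j != i + n -> psi i j x = 0.

Definition hom_diff {X Y : complex R} (n : int)
    (psi : forall i j : int, {linear X i -> Y j}) (i k : int) (x : X i) : Y k :=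
  cd Y (i + n) k (psi i (i + n) x)
  - ((-1) ^+ `|n|%N) *: psi (i - 1) k (cd X i (i - 1) x).

Definition hom_complex_exact (X Y : complex R) : Prop :=
  forall (n : int) (psi : forall i j : int, {linear X i -> Y j}),
    homogeneous n psi ->
    (forall (i k : int) (x : X i), hom_diff n psi i k x = 0) ->
    exists phi : forall i j : int, {linear X i -> Y j},
      homogeneous (n + 1) phi /\
      forall (i k : int) (x : X i), hom_diff (n + 1) phi i k x = psi i k x.

Definition DG_projective (X : complex R) : Prop :=
  degreewise_projective X /\
  forall G : complex R, exact_complex G -> hom_complex_exact X G.

Definition factors_through_projective {X F : complex R} (f : chain_map X F) : Prop :=
  exists (P : complex R) (u : chain_map X P) (v : chain_map P F),
    projective_complex P /\ forall (i : int) (x : X i), v i (u i x) = f i x.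

End Defs.
Arguments cmap {R X Y} c i.
Arguments chain_map {R} X Y.
Arguments exact_complex {R} X.
Arguments trivial_module {R} M.
Arguments projective_module {R} P.
Arguments projective_complex {R} P.
Arguments bounded_below {R} X.
Arguments bounded {R} X.
Arguments degreewise_projective {R} X.
Arguments homogeneous {R X Y} n psi.
Arguments hom_diff {R X Y} n psi i k x.
Arguments hom_complex_exact {R} X Y.
Arguments DG_projective {R} X.
Arguments factors_through_projective {R X F} f.

(* Main.v *)
Require Import Defs.
From HB Require Import structures.
From mathcomp Require Import all_boot all_order all_algebra zify.
From Stdlib Require Import ClassicalEpsilon.
Import Order.TTheory GRing.Theory Num.Theory.
Local Open Scope ring_scope.

Section Lin.
Variable R : pzRingType.
Definition mklin (U V : lmodType R) (f : U -> V) (H : linear f) : {linear U -> V} :=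
  HB.pack f (GRing.isLinear.Build R U V *:%R f H).
Lemma mklinE (U V : lmodType R) f H x : @mklin U V f H x = f x. Proof. by []. Qed.
Variables U V W : lmodType R.

Lemma id_linear : linear (fun x : U => x). Proof. by []. Qed.
Definition idl : {linear U -> U} := @mklin U U _ id_linear.
Lemma zero_linear : linear (fun _ : U => 0 : V).
Proof. by move=> a x y; rewrite scaler0 addr0. Qed.
Definition zl : {linear U -> V} := @mklin U V _ zero_linear.

Variables (g : {linear U -> W}) (t : {linear V -> W}).
Definition pb := [pred q : U * V | g q.1 == t q.2].
Lemma pb_closed : submod_closed pb.
Proof.
split; first by rewrite /pb inE /= !linear0.
move=> a [u1 v1] [u2 v2]; rewrite !inE /= => /eqP e1 /eqP e2.
by rewrite !linearP e1 e2.
Qed.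
HB.instance Definition _ := GRing.isSubmodClosed.Build R (U * V)%type pb pb_closed.
Record PB := MkPB { pbv :> (U * V)%type; pbP : pbv \in pb }.
HB.instance Definition _ := [isSub for pbv].
HB.instance Definition _ := [Choice of PB by <:].
HB.instance Definition _ := [SubChoice_isSubLmodule of PB by <:].
End Lin.
Arguments mklin {R U V}.
Arguments PB {R U V W}. Arguments MkPB {R U V W g t}. Arguments pbv {R U V W g t}. Arguments pbP {R U V W g t}. Arguments pb {R U V W}.
Arguments idl {R U}.
Arguments zl {R U V}.

Lemma proj_lift_img (R : pzRingType) (P M N : lmodType R)
  (g : {linear M -> N}) (t : {linear P -> N}) :
  projective_module P -> (forall x, exists m, g m = t x) ->
  exists h : {linear P -> M}, forall x, g (h x) = t x.
Proof.
move=> PP sur.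
have l2 : linear (fun q : PB g t => (pbv q).2).
  by move=> a u v.
have l1 : linear (fun q : PB g t => (pbv q).1).
  by move=> a u v.
have sur2 : forall x : P, exists q : PB g t, mklin _ l2 q = x.
  move=> x; have [m Hm] := sur x.
  have mem : (m, x) \in pb g t by rewrite inE /= Hm.
  by exists (MkPB _ mem).
have [k Hk] := PP _ _ (mklin _ l2) sur2 idl.
have l3 : linear (fun x => (pbv (k x)).1).
  by move=> a u v; rewrite linearP.
exists (mklin _ l3) => x /=.
have := pbP (k x); rewrite inE => /eqP ->.
by have := Hk x; rewrite /= => ->.
Qed.
Lemma pairE (R : pzRingType) (U V : lmodType R) (a : R) (x1 x2 : U) (y1 y2 : V) :
  a *: ((x1, y1) : (U * V)%type) + (x2, y2) = (a *: x1 + x2, a *: y1 + y2).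
Proof. by []. Qed.
Lemma pair0 (R : pzRingType) (U V : lmodType R) : (0 : (U * V)%type) = (0, 0).
Proof. by []. Qed.
Lemma pairD (R : pzRingType) (U V : lmodType R) (x1 x2 : U) (y1 y2 : V) :
  ((x1, y1) : (U * V)%type) + (x2, y2) = (x1 + x2, y1 + y2).
Proof. by []. Qed.

Section Did.
Variable R : pzRingType.
Variable X : int -> lmodType R.
Definition did (p q : int) : {linear X p -> X q} :=
  match p =P q with
  | ReflectT e => eq_rect p (fun k => {linear X p -> X k}) idl q e
  | ReflectF _ => zl end.
Lemma did_id p x : did p p x = x.
Proof.
rewrite /did; case: eqP => // e.
by rewrite (eq_irrelevance e erefl).
Qed.
Lemma did_neq p q x : p != q -> did p q x = 0.
Proof. by rewrite /did; case: eqP. Qed.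
End Did.
Arguments did {R X}.

Lemma did_nat (R : pzRingType) (X Y : int -> lmodType R)
  (g : forall i, {linear X i -> Y i}) p q x :
  g q (did p q x) = did p q (g p x).
Proof.
have [<-|ne] := eqVneq p q; first by rewrite !did_id.
by rewrite !did_neq // linear0.
Qed.

Section Disk2.
Variable R : pzRingType.
Variable P : complex R.
Definition D2obj (n : int) : lmodType R := (cobj P n * cobj P (n + 1))%type.
Lemma D2d_lin i j : linear (fun ab : D2obj i => (0 : cobj P j, did (X:=P) i (j + 1) ab.1) : D2obj j).
Proof. by move=> a [x1 y1] [x2 y2]; rewrite /= linearP pairE scaler0 addr0. Qed.
Definition D2d i j : {linear D2obj i -> D2obj j} := mklin _ (D2d_lin i j).
Lemma D2_supp i j x : j != i - 1 -> D2d i j x = 0.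
Proof.
move=> ne; rewrite mklinE did_neq //.
by apply: contra ne => /eqP ->; rewrite addrK.
Qed.
Lemma D2_dd i j k x : D2d j k (D2d i j x) = 0.
Proof. by rewrite !mklinE /= linear0. Qed.
Definition Disk2 : complex R := @Complex R D2obj D2d D2_supp D2_dd.

Lemma pi_lin n : linear (fun ab : D2obj n => ab.1 + cd P (n + 1) n ab.2).
Proof.
move=> a [x1 y1] [x2 y2] /=; rewrite linearP scalerDr.
by rewrite -!addrA; congr (_ + _); rewrite addrCA.
Qed.
Definition pil n : {linear Disk2 n -> P n} := mklin _ (pi_lin n).
Lemma pi_comm i j (x : Disk2 i) : pil j (cd Disk2 i j x) = cd P i j (pil i x).
Proof.
case: x => a b; rewrite /= add0r linearD cd_cd addr0.
have [e|ne] := eqVneq i (j + 1).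
  by subst i; rewrite did_id.
rewrite did_neq // linear0 cd_supp //.
by apply: contra ne => /eqP ->; rewrite subrK.
Qed.
Definition pic : chain_map Disk2 P := @ChainMap R _ _ pil pi_comm.

Lemma idc_comm (Y : complex R) i j (x : Y i) : idl (cd Y i j x) = cd Y i j (idl x).
Proof. by []. Qed.
End Disk2.
Arguments pic {R P}. Arguments Disk2 {R}.
Definition idc (R : pzRingType) (Y : complex R) : chain_map Y Y :=
  @ChainMap R Y Y (fun i => idl) (@idc_comm R Y).

Lemma projective_exact (R : pzRingType) (P : complex R) :
  projective_complex P -> exact_complex P.
Proof.
move=> PP i z zc.
have sur : forall (i : int) (y : P i), exists x : Disk2 P i, pic i x = y.
  by move=> n y; exists (y, 0); rewrite /= linear0 addr0.
have [k Hk] := PP _ _ pic sur (@idc R P).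
have := @cmap_comm R _ _ k i (i - 1) z; rewrite zc linear0.
have := Hk i z; rewrite /=.
case: (k i z) => a b /= Ez.
move=> /(congr1 snd) /=; rewrite subrK did_id => a0; rewrite -Ez -a0.
by rewrite add0r; exists b.
Qed.

Section Disk.
Variable R : pzRingType.
Variable X : complex R.
Definition Dobj (n : int) : lmodType R := (cobj X (n - 1) * cobj X n)%type.
Lemma Dd_lin i j : linear (fun ab : Dobj i => (0 : cobj X (j - 1), did (X:=X) (i - 1) j ab.1) : Dobj j).
Proof. by move=> a [x1 y1] [x2 y2]; rewrite /= linearP pairE scaler0 addr0. Qed.
Definition Dd i j : {linear Dobj i -> Dobj j} := mklin _ (Dd_lin i j).
Lemma D_supp i j x : j != i - 1 -> Dd i j x = 0.
Proof. by move=> ne; rewrite mklinE did_neq // eq_sym. Qed.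
Lemma D_dd i j k x : Dd j k (Dd i j x) = 0.
Proof. by rewrite !mklinE /= linear0. Qed.
Definition Disk : complex R := @Complex R Dobj Dd D_supp D_dd.

Lemma Disk_proj : degreewise_projective X -> projective_complex Disk.
Proof.
move=> PX M N g gs f.
have bl : forall n, linear (fun a : cobj X (n - 1) => f n ((a, 0) : Disk n)).
  move=> n a x y; rewrite -linearP; congr (f n _).
  by rewrite pairE scaler0 addr0.
have H : forall n, exists ga : {linear cobj X (n - 1) -> M n},
    forall x, g n (ga x) = f n ((x, 0) : Disk n).
  by move=> n; exact: (PX (n - 1) _ _ (g n) (gs n) (mklin _ (bl n))).
pose ga n := proj1_sig (constructive_indefinite_description _ (H n)).
have gaP : forall n x, g n (ga n x) = f n ((x, 0) : Disk n).
  by move=> n; exact: (proj2_sig (constructive_indefinite_description _ (H n))).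
have hl : forall n, linear (fun ab : Disk n =>
   ga n ab.1 + cd M (n + 1) n (ga (n + 1) (did (X:=X) n (n + 1 - 1) ab.2))).
  move=> n a [x1 y1] [x2 y2] /=; rewrite !linearP scalerDr; exact: addrACA.
have hc : forall i j (x : Disk i), mklin _ (hl j) (cd Disk i j x)
      = cd M i j (mklin _ (hl i) x).
  move=> i j [a b] /=.
  rewrite linearD cd_cd addr0 linear0 add0r.
  have [->|ne] := eqVneq j (i - 1).
    by rewrite did_id subrK did_id.
  rewrite [did (i - 1) j a]did_neq; last by rewrite eq_sym.
  by rewrite !linear0 cd_supp.
exists (@ChainMap R _ _ (fun n => mklin _ (hl n)) hc) => n [a b] /=.
rewrite linearD gaP (@cmap_comm R _ _ g) gaP -(@cmap_comm R _ _ f) /=.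
rewrite addrK !did_id -linearD pairD addr0 add0r.
by [].
Qed.
End Disk.
Arguments Disk {R}.

Lemma factor (R : pzRingType) (X F : complex R) (f : chain_map X F) :
  degreewise_projective X -> hom_complex_exact X F -> factors_through_projective f.
Proof.
move=> PX HX.
have fl : forall i j, linear (fun x : X i => did (X:=F) i j (f i x)).
  by move=> i j a x y; rewrite !linearP.
pose f' i j := mklin _ (fl i j).
have hf : homogeneous 0 f'.
  by move=> i j x; rewrite addr0 => ne; rewrite mklinE did_neq // eq_sym.
have cf : forall i k x, hom_diff 0 f' i k x = 0.
  move=> i k x; rewrite /hom_diff /= addr0 did_id expr0 scale1r.
  rewrite -(@cmap_comm R _ _ f).
  have [->|ne] := eqVneq k (i - 1); first by rewrite did_id subrr.
  by rewrite cd_supp // linear0 did_neq ?subrr // eq_sym.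
have [s [hs Hs]] := HX 0 f' hf cf.
have ul : forall n, linear (fun b : X n => (cd X n (n - 1) b, b) : Disk X n).
  by move=> n a x y; rewrite linearP.
have uc : forall i j (x : X i), mklin _ (ul j) (cd X i j x) = cd (Disk X) i j (mklin _ (ul i) x).
  move=> i j x /=; rewrite cd_cd; congr (_, _).
  have [->|ne] := eqVneq j (i - 1); first by rewrite did_id.
  by rewrite cd_supp // did_neq // eq_sym.
have vl : forall n, linear (fun ab : Disk X n =>
    s (n - 1) n ab.1 + cd F (n + 1) n (s n (n + 1) ab.2)).
  move=> n a [x1 y1] [x2 y2] /=; rewrite !linearP scalerDr; exact: addrACA.
have vc : forall i j (x : Disk X i), mklin _ (vl j) (cd (Disk X) i j x)
     = cd F i j (mklin _ (vl i) x).
  move=> i j [a b] /=.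
  rewrite linear0 add0r linearD cd_cd addr0.
  have [->|ne] := eqVneq j (i - 1).
    by rewrite did_id subrK.
  rewrite [did (i - 1) j a]did_neq; last by rewrite eq_sym.
  by rewrite !linear0 cd_supp.
exists (Disk X), (@ChainMap R _ _ (fun n => mklin _ (ul n)) uc),
  (@ChainMap R _ _ (fun n => mklin _ (vl n)) vc).
split; first exact: Disk_proj.
move=> i x /=.
have := Hs i i x; rewrite /hom_diff /= did_id.
by rewrite expr1 scaleN1r opprK addrC.
Qed.

Lemma sgnS (R : pzRingType) (n : int) :
  (-1) ^+ `|(n + 1)%R|%N = - ((-1) ^+ `|n|%N) :> R.
Proof.
case: n => [k|k].
  by rewrite /= -addn1 exprD expr1 mulrN1.
rewrite NegzE.
case: k => [|k]; first by rewrite /= expr0 expr1 opprK.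
have -> : `|(- (k.+2)%:Z + 1)%R|%N = k.+1 by lia.
have -> : `|(- (k.+2)%:Z)%R|%N = k.+2 by lia.
by rewrite [in RHS]exprS mulN1r opprK.
Qed.

Lemma hd_ext (R : pzRingType) (X G : complex R) (n : int)
  (p q : forall i j : int, {linear X i -> G j}) a l x :
  (forall j y, p a j y = q a j y) -> (forall j y, p (a - 1) j y = q (a - 1) j y) ->
  hom_diff n p a l x = hom_diff n q a l x.
Proof. by move=> H1 H2; rewrite /hom_diff H1 H2. Qed.

Section BB.
Variables (R : pzRingType) (X G : complex R) (b : int).
Hypothesis Hb : forall m, m <= b -> trivial_module (X m).
Hypothesis PX : degreewise_projective X.
Hypothesis EG : exact_complex G.
Variables (n : int) (psi : forall i j : int, {linear X i -> G j}).
Hypothesis hpsi : homogeneous n psi.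
Hypothesis cpsi : forall i k x, hom_diff n psi i k x = 0.

Definition Fam := forall i j : int, {linear X i -> G j}.
Definition Inv (c : int) (phi : Fam) :=
  homogeneous (n + 1) phi /\ (forall a j x, c < a -> phi a j x = 0) /\
  (forall a l x, a <= c -> hom_diff (n + 1) phi a l x = psi a l x).

Lemma step c phi : Inv c phi -> exists phi' : Fam, Inv (c + 1) phi' /\
  forall a j x, a <= c -> phi' a j x = phi a j x.
Proof.
case=> [hphi [zphi dphi]].
move Ei : (c + 1) => i.
have ec : c = i - 1 by rewrite -Ei addrK.
subst c.
pose sg : R := (-1) ^+ `|(n + 1)%R|%N.
have tl : linear (fun x : X i => psi i (i + n) x + sg *: phi (i - 1) (i + n) (cd X i (i - 1) x)).
  move=> a x y; rewrite !linearP !scalerDr !scalerA (commrX _ (commrN1 a)); exact: addrACA.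
pose t := mklin _ tl.
have e1 : i - 1 + (n + 1) = i + n by lia.
have cyc : forall x, cd G (i + n) (i + n - 1) (t x) = 0.
  move=> x /=; rewrite linearD linearZ_LR.
  have h1 := cpsi i (i + n - 1) x; rewrite /hom_diff in h1.
  move/eqP: h1; rewrite subr_eq0 => /eqP ->.
  have h2 := dphi (i - 1) (i + n - 1) (cd X i (i - 1) x) (lexx _).
  rewrite /hom_diff cd_cd linear0 scaler0 subr0 in h2.
  rewrite e1 in h2; rewrite h2 /sg sgnS scaleNr; exact: subrr.
have sur : forall x, exists y, cd G (i + n + 1) (i + n) y = t x.
  by move=> x; exact: EG (cyc x).
have [l0 Hl0] := @proj_lift_img R _ _ _ _ t (PX i) sur.
have pl : forall a j, linear (fun x : X a => phi a j x + did (X:=G) (i + n + 1) j (l0 (did (X:=X) a i x))).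
  move=> a j r x y; rewrite !linearP scalerDr; exact: addrACA.
pose phi' (a j : int) := mklin _ (pl a j).
have agree : forall a j x, a <= i - 1 -> phi' a j x = phi a j x.
  move=> a j x le; rewrite /= [did a i x]did_neq ?linear0 ?addr0 //.
  by apply/eqP; lia.
exists phi'; split => //.
have e2 : i + (n + 1) = i + n + 1 by rewrite addrA.
split.
  move=> a j x ne /=; rewrite hphi // add0r.
  have [ea|na] := eqVneq a i; last by rewrite [did a i x]did_neq ?linear0.
  subst a; rewrite did_id did_neq //; by rewrite -e2 eq_sym.
split.
  move=> a j x lt /=; rewrite zphi; last by lia.
  by rewrite add0r [did a i x]did_neq ?linear0 //; apply/eqP; lia.
move=> a l x le.
have [ea|na] := eqVneq a i; last first.
  have le' : a <= i - 1 by have := na; move/eqP; lia.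
  rewrite (@hd_ext _ _ _ _ _ phi); first exact: dphi.
    by move=> j y; exact: agree.
  by move=> j y; apply: agree; lia.
subst a; rewrite /hom_diff /= zphi; last by lia.
rewrite [did (i - 1) i _]did_neq; last by apply/eqP; lia.
rewrite linear0 linear0 addr0.
rewrite add0r e2 did_id.
have [->|nl] := eqVneq l (i + n).
  by rewrite Hl0 /= did_id addrK.
rewrite cd_supp; last by rewrite addrK.
rewrite hpsi // hphi; last by rewrite e1.
by rewrite scaler0 subr0.
Qed.

Definition zf : Fam := fun i j => zl.
Lemma base0 : Inv b zf.
Proof.
split; first by [].
split; first by [].
move=> a l x le; rewrite (Hb _ le x) /hom_diff /= linear0.
by rewrite scaler0 subr0 linear0.
Qed.

Lemma Inv_eq c c' phi : c = c' -> Inv c phi -> Inv c' phi.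
Proof. by move->. Qed.

Definition cid := constructive_indefinite_description.
Arguments cid {A P}.

Lemma eqS (k : nat) : b + k%:Z + 1 = b + k.+1%:Z.
Proof. lia. Qed.

Fixpoint bld (k : nat) : {phi : Fam | Inv (b + k%:Z) phi} :=
  match k with
  | 0%N => exist _ zf (Inv_eq _ _ _ (esym (addr0 b)) base0)
  | k'.+1 =>
      let s := bld k' in
      let H := step _ _ (proj2_sig s) in
      exist _ (proj1_sig (cid H))
        (Inv_eq _ _ _ (eqS k') (proj1 (proj2_sig (cid H))))
  end.

Lemma bld_S k a j x : a <= b + k%:Z ->
  proj1_sig (bld k.+1) a j x = proj1_sig (bld k) a j x.
Proof.
move=> le /=.
exact: (proj2 (proj2_sig (cid (step _ _ (proj2_sig (bld k)))))).
Qed.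

Lemma bld_le k k' a j x : (k <= k')%N -> a <= b + k%:Z ->
  proj1_sig (bld k') a j x = proj1_sig (bld k) a j x.
Proof.
move=> lk le; elim: k' lk => [|k' IH] lk.
  by have -> : k = 0%N by lia.
have [e|lt] := eqVneq k k'.+1; first by rewrite e.
rewrite bld_S; last by lia.
apply: IH; lia.
Qed.

Lemma bld_eq k1 k2 a j x : a <= b + k1%:Z -> a <= b + k2%:Z ->
  proj1_sig (bld k1) a j x = proj1_sig (bld k2) a j x.
Proof.
move=> l1 l2; have [le|le] := leqP k1 k2.
  by rewrite (@bld_le k1 k2).
by rewrite (@bld_le k2 k1) //; apply: ltnW.
Qed.

Lemma hom_sol : exists phi : Fam, homogeneous (n + 1) phi /\
  forall i k x, hom_diff (n + 1) phi i k x = psi i k x.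
Proof.
pose kk (a : int) := `|(a - b)%R|%N.
exists (fun a j => proj1_sig (bld (kk a)) a j); split.
  by move=> a j x; exact: (proj1 (proj2_sig (bld (kk a))) a j x).
move=> a l x.
rewrite (@hd_ext _ _ _ _ _ (proj1_sig (bld (kk a)))) //.
  apply: (proj2 (proj2 (proj2_sig (bld (kk a))))); rewrite /kk; lia.
by move=> j y; apply: bld_eq; rewrite /kk; lia.
Qed.
End BB.

Section Rows.
Variable R : pzRingType.
Definition ssum {m : nat} (A : 'rV[R]_m) : R := \sum_(k < m) A 0 k.
Lemma ssumP m (a : R) (A B : 'rV[R]_m) : ssum (a *: A + B) = a * ssum A + ssum B.
Proof.
rewrite /ssum mulr_sumr -big_split /=; apply: eq_bigr => k _.
by rewrite !mxE.
Qed.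
Lemma sl_lin (U : lmodType R) m (v : U) : linear (fun A : 'rV[R]_m => ssum A *: v).
Proof. by move=> a A B; rewrite ssumP scalerDl scalerA. Qed.
Lemma ssum0 m : ssum (0 : 'rV[R]_m) = 0.
Proof. by rewrite /ssum big1 // => k _; rewrite mxE. Qed.
Lemma rv_bool (b : bool) (A : 'rV[R]_b) : A = ssum A *: const_mx 1.
Proof.
apply/rowP => k; rewrite !mxE mulr1.
case: b A k => A k; last by case: k.
by rewrite /ssum big_ord1 (ord1 k).
Qed.
Lemma ssum_false (b : bool) (A : 'rV[R]_b) : ~~ b -> ssum A = 0.
Proof. by case: b A => // A _; rewrite /ssum big_ord0. Qed.
Lemma ssum_true (b : bool) : b -> ssum (const_mx 1 : 'rV[R]_b) = 1.
Proof. by case: b => // _; rewrite /ssum big_ord1 mxE. Qed.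

Lemma rv_proj (m : nat) : projective_module ('rV[R]_m : lmodType R).
Proof.
move=> M N g gs f.
have [ys Hy] := fin_all_exists (fun j : 'I_m => gs (f (delta_mx 0 j))).
have hl : linear (fun A : 'rV[R]_m => \sum_j A 0 j *: ys j).
  move=> a A B; rewrite scaler_sumr -big_split /=; apply: eq_bigr => k _.
  by rewrite !mxE scalerDl scalerA.
exists (mklin _ hl) => A /=.
rewrite linear_sum {2}(row_sum_delta A) linear_sum; apply: eq_bigr => k _.
by rewrite linearZ_LR Hy linearZ_LR.
Qed.
End Rows.
Arguments ssum {R m}.

Section Sphere.
Variables (R : pzRingType) (i0 : int).
Definition Sobj (m : int) : lmodType R := 'rV[R]_(m == i0).
Lemma S_supp i j (x : Sobj i) : j != i - 1 -> (zl : {linear Sobj i -> Sobj j}) x = 0.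
Proof. by []. Qed.
Lemma S_dd i j k (x : Sobj i) :
  (zl : {linear Sobj j -> Sobj k}) ((zl : {linear Sobj i -> Sobj j}) x) = 0.
Proof. by []. Qed.
Definition Sph : complex R := @Complex R Sobj (fun i j => zl) S_supp S_dd.

Lemma Sph_triv m : m != i0 -> trivial_module (Sph m).
Proof.
move=> ne A; rewrite [A](@rv_bool R) ssum_false ?scale0r //.
Qed.

Lemma Sph_bounded : bounded Sph.
Proof.
split.
  exists (i0 - 1) => m le; apply: Sph_triv; apply/eqP; lia.
exists (i0 + 1) => m le; apply: Sph_triv; apply/eqP; lia.
Qed.

Lemma Sph_proj : degreewise_projective Sph.
Proof. by move=> m; exact: rv_proj. Qed.

Lemma Sph_DG : DG_projective Sph.
Proof.
split; first exact: Sph_proj.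
move=> G EG n psi hpsi cpsi.
pose e : Sph i0 := const_mx 1.
have cy : cd G (i0 + n) (i0 + n - 1) (psi i0 (i0 + n) e) = 0.
  have := cpsi i0 (i0 + n - 1) e; rewrite /hom_diff /= linear0 scaler0 subr0.
  by [].
have [w Hw] := EG _ _ cy.
pose phi i j := mklin _ (@sl_lin R (G j) (i == i0) (did (X:=G) (i0 + n + 1) j w)).
have e2 : i0 + (n + 1) = i0 + n + 1 by rewrite addrA.
exists phi; split.
  move=> i j A ne /=.
  have [ei|ni] : i = i0 \/ i != i0 by case: (i =P i0) => [->|/eqP]; auto.
    by subst i; rewrite did_neq ?scaler0 // eq_sym -e2.
  by rewrite ssum_false ?scale0r.
move=> i k A; rewrite /hom_diff /= ssum0 scale0r scaler0 subr0.
have [ei|ni] : i = i0 \/ i != i0 by case: (i =P i0) => [->|/eqP]; auto.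
2:{
  have A0 : A = 0 by exact: Sph_triv.
  by rewrite A0 ssum0 scale0r !linear0. }
subst i; rewrite e2 did_id [in RHS](@rv_bool R _ A) linearZ_LR linearZ_LR.
congr (_ *: _).
have [->|nk] := eqVneq k (i0 + n); first by rewrite Hw.
by rewrite cd_supp ?hpsi // addrK.
Qed.

Variables (F : complex R) (x : F i0).
Hypothesis xc : cd F i0 (i0 - 1) x = 0.
Definition fSm m : {linear Sph m -> F m} := mklin _ (@sl_lin R (F m) (m == i0) (did (X:=F) i0 m x)).
Lemma fS_comm i j (A : Sph i) : fSm j (cd Sph i j A) = cd F i j (fSm i A).
Proof.
rewrite /= ssum0 scale0r linearZ_LR.
have [ei|ni] : i = i0 \/ i != i0 by case: (i =P i0) => [->|/eqP]; auto.
2: by rewrite did_neq ?linear0 ?scaler0 // eq_sym.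
subst i; rewrite did_id.
have [->|nj] := eqVneq j (i0 - 1); first by rewrite xc scaler0.
by rewrite cd_supp ?scaler0.
Qed.
Definition fS : chain_map Sph F := @ChainMap R _ _ fSm fS_comm.

Lemma fS_factor : factors_through_projective fS -> exists y : F (i0 + 1), cd F (i0 + 1) i0 y = x.
Proof.
case=> P [u [v [PP Huv]]].
pose e : Sph i0 := const_mx 1.
have zc : cd P i0 (i0 - 1) (u i0 e) = 0.
  by rewrite -(@cmap_comm R _ _ u) /= linear0.
have [w Hw] := @projective_exact R P PP _ _ zc.
exists (v (i0 + 1) w).
rewrite -(@cmap_comm R _ _ v) Hw Huv /= did_id ssum_true ?scale1r //.
Qed.
End Sphere.

Lemma exact_of (R : pzRingType) (F : complex R) :
  (forall (X : complex R) (f : chain_map X F), bounded X -> degreewise_projective X ->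
     DG_projective X -> factors_through_projective f) -> exact_complex F.
Proof.
move=> H i x xc.
apply: (@fS_factor R i F x xc).
apply: H; [exact: Sph_bounded | exact: Sph_proj | exact: Sph_DG].
Qed.
Lemma bb_hom (R : pzRingType) (X : complex R) : bounded_below X -> degreewise_projective X ->
  forall G, exact_complex G -> hom_complex_exact X G.
Proof.
move=> [b Hb] PX G EG n psi hpsi cpsi.
exact: (@hom_sol R X G b Hb PX EG n psi hpsi cpsi).
Qed.

Theorem corollary3p8 (R : pzRingType) (F : complex R) :
  (exact_complex F <->
     (forall (X : complex R) (f : chain_map X F),
        bounded X -> degreewise_projective X -> factors_through_projective f)) /\
  (exact_complex F <->
     (forall (X : complex R) (f : chain_map X F),
        bounded_below X -> degreewise_projective X -> factors_through_projective f)) /\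
  (exact_complex F <->
     (forall (X : complex R) (f : chain_map X F),
        DG_projective X -> factors_through_projective f)).
Proof.
split; [|split]; split.
- move=> EF X f [bb _] PX; apply: factor => //; exact: bb_hom.
- by move=> H; apply: exact_of => X f bX pX _; exact: H.
- move=> EF X f bb PX; apply: factor => //; exact: bb_hom.
- by move=> H; apply: exact_of => X f [bX _] pX _; exact: H.
- by move=> EF X f [PX HX]; apply: factor => //; exact: HX.
- by move=> H; apply: exact_of => X f _ _ dX; exact: H.
Qed.
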